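(* Let $P$ be a Poisson bracket on $\mathbb{R}^n$ and let $\odot_\nu$ be the sun-product associated with a star-product on $(\mathbb{R}^n,P)$, extended to $\mathsf{N}_\nu$ via its differential cochains. Then $\odot_\nu$ is weakly trivial: there exists an $\mathbb{R}[[\nu]]$-linear map $S_\nu=\sum_{r\ge0}\nu^rS_r:\mathsf{N}_\nu\to\mathsf{N}_\nu$ with $S_0=I$ and each $S_r$ ($r\ge1$) a differential operator on $\mathsf{N}$, such that $S_\nu(f\odot_\nu g)=fg$ for all $f,g\in\mathsf{N}$.
   Context: $\mathsf{N}=C^\infty(\mathbb{R}^n)$, coordinates $x_1,\dots,x_n$, $\mathsf{Pol}=\mathbb{R}[x_1,\dots,x_n]$, $\mathsf{N}_\nu=\mathsf{N}[[\nu]]$, $\pi:\mathsf{N}_\nu\to\mathsf{N}$ the projection onto the $\nu^0$-coefficient. A (differential) star-product on $(\mathbb{R}^n,P)$ is a bilinear map $f\ast_\nu g=\sum_{r\ge0}\nu^rC_r(f,g)$ from $\mathsf{N}\times\mathsf{N}$ to $\mathsf{N}[[\nu]]$, extended $\mathbb{R}[[\nu]]$-bilinearly, with bidifferential $C_r$ satisfying: $C_0(f,g)=fg$; $C_r(c,f)=C_r(f,c)=0$ for $r\ge1$, $c$ constant; associativity $\sum_{s+t=r}C_s(C_t(f,g),h)=\sum_{s+t=r}C_s(f,C_t(g,h))$; $C_1(f,g)-C_1(g,f)=2P(f,g)$. Its sun-product cochains $\rho_r:\mathsf{Pol}\to\mathsf{N}$ are determined by $\rho(1)=1$ and $\rho(x_{i_1}\cdots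 x_{i_k})=\frac1{k!}\sum_{\sigma\in S_k}x_{i_{\sigma(1)}}\ast_\nu\cdots\ast_\nu x_{i_{\sigma(k)}}=\sum_r\nu^r\rho_r(x_{i_1}\cdots x_{i_k})$, with $\rho_0$ the identity; the sun-product on polynomial data is $f\odot_\nu g=\rho(\pi(fg))$. Each $\rho_r$ is the restriction to $\mathsf{Pol}$ of a unique differential operator on $\mathsf{N}$ (still denoted $\rho_r$), and the sun-product is extended to $\mathsf{N}_\nu$ by $f\odot_\nu g=\pi(fg)+\sum_{r\ge1}\nu^r\rho_r(\pi(fg))$. *)

(* Defs.v *)
From HB Require Import structures.
From mathcomp Require Import all_boot all_order all_algebra all_fingroup.
From mathcomp Require Import all_classical all_reals all_analysis.
Set Implicit Arguments. Unset Strict Implicit. Unset Printing Implicit Defensive.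
Import Order.TTheory GRing.Theory Num.Theory.
Import numFieldNormedType.Exports.
Local Open Scope ring_scope.

Section SunDefs.
Variables (R : realType) (n : nat).

Local Notation V := 'rV[R]_n.
(* N = C^oo(R^n), as functions V -> R satisfying [smooth] *)
Local Notation fn := (V -> R).

Definition basisv (i : 'I_n) : V := \row_(j < n) (i == j)%:R.

Definition partial (i : 'I_n) (f : fn) : fn := fun x => derive f x (basisv i).

Definition iter_partial (s : seq 'I_n) (f : fn) : fn := foldr partial f s.

Definition smooth (f : fn) : Prop :=
  forall (s : seq 'I_n) (x : V), differentiable (iter_partial s f) x.

Definition coordf (i : 'I_n) : fn := fun x => x ord0 i.
Definition cstf (c : R) : fn := fun _ => c.
Definition mulfn (f g : fn) : fn := fun x => f x * g x.

Definition is_diffop (D : fn -> fn) : Prop :=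
  exists l : seq (fn * seq 'I_n),
    (forall p, p \in l -> smooth p.1) /\
    forall f, smooth f ->
      D f = fun x => \sum_(p <- l) p.1 x * iter_partial p.2 f x.

Definition is_bidiffop (C : fn -> fn -> fn) : Prop :=
  exists l : seq (fn * seq 'I_n * seq 'I_n),
    (forall p, p \in l -> smooth p.1.1) /\
    forall f g, smooth f -> smooth g ->
      C f g = fun x => \sum_(p <- l)
                 p.1.1 x * iter_partial p.1.2 f x * iter_partial p.2 g x.

Definition poisson_bracket (P : fn -> fn -> fn) : Prop :=
  [/\ (forall f g, smooth f -> smooth g -> smooth (P f g)),
      (forall a f h g, smooth f -> smooth h -> smooth g ->
         P (fun x => a * f x + h x) g = fun x => a * P f g x + P h g x),
      (forall f g, smooth f -> smooth g -> P f g = fun x => - P g f x),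
      (forall f h g, smooth f -> smooth h -> smooth g ->
         P (mulfn f h) g = fun x => f x * P h g x + h x * P f g x) &
      (forall f g h, smooth f -> smooth g -> smooth h ->
         forall x, P f (P g h) x + P g (P h f) x + P h (P f g) x = 0)].

Definition star_product (P : fn -> fn -> fn) (C : nat -> fn -> fn -> fn) : Prop :=
  [/\ (forall r, is_bidiffop (C r)),
      (forall f g, smooth f -> smooth g -> C 0%N f g = mulfn f g),
      (forall r c f, (1 <= r)%N -> smooth f ->
         C r (cstf c) f = cstf 0 /\ C r f (cstf c) = cstf 0),
      (forall r f g h, smooth f -> smooth g -> smooth h ->
         forall x, \sum_(s < r.+1) C s (C (r - s)%N f g) h x
                 = \sum_(s < r.+1) C s f (C (r - s)%N g h) x) &
      (forall f g, smooth f -> smooth g ->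
         forall x, C 1%N f g x - C 1%N g f x = 2 * P f g x)].

(* formal power series N[[nu]] : the r-th coefficient is F r *)
Definition fps := nat -> fn.

Definition embF (f : fn) : fps := fun r => if r == 0%N then f else cstf 0.

Definition starF (C : nat -> fn -> fn -> fn) (F G : fps) : fps :=
  fun r x => \sum_(s < r.+1) \sum_(a < (r - s).+1)
               C s (F a) (G (r - s - a)%N) x.

Definition star_list (C : nat -> fn -> fn -> fn) (s : seq 'I_n) : fps :=
  foldr (fun i acc => starF C (embF (coordf i)) acc) (embF (cstf 1)) s.

Definition monomial k (t : k.-tuple 'I_n) : fn :=
  fun x => \prod_(j < k) x ord0 (tnth t j).

Definition rho_mono (C : nat -> fn -> fn -> fn) k (t : k.-tuple 'I_n) : fps :=
  fun r x => (k`!%:R)^-1 *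
    \sum_(sigma : 'S_k) star_list C [seq tnth t (sigma j) | j <- enum 'I_k] r x.

(* rho r is a differential operator on N whose restriction to Pol is the
   sun-product cochain rho_r *)
Definition sun_cochains (C : nat -> fn -> fn -> fn) (rho : nat -> fn -> fn) : Prop :=
  forall r, is_diffop (rho r) /\
    forall k (t : k.-tuple 'I_n), rho r (monomial t) = rho_mono C t r.

Definition piF (F : fps) : fn := F 0%N.

Definition sunF (rho : nat -> fn -> fn) (F G : fps) : fps :=
  fun r => if r == 0%N then mulfn (piF F) (piF G) else rho r (mulfn (piF F) (piF G)).

Definition applyS (S : nat -> fn -> fn) (F : fps) : fps :=
  fun r x => \sum_(s < r.+1) S s (F (r - s)%N) x.

End SunDefs.

(* Main.v *)
Require Import Defs.
From HB Require Import structures.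
From mathcomp Require Import all_boot all_order all_algebra all_fingroup.
From mathcomp Require Import all_classical all_reals all_analysis.
Import Order.TTheory GRing.Theory Num.Theory.
Import numFieldNormedType.Exports.
Local Open Scope ring_scope.
Set Implicit Arguments. Unset Strict Implicit.

Section Aux.
Variables (R : realType) (n : nat).
Local Notation V := 'rV[R]_n.
Local Notation fn := (V -> R).
Implicit Types f g h : fn.

Lemma smooth_diff f x : smooth f -> differentiable f x.
Proof. by move=> sf; exact: (sf [::] x). Qed.

Lemma smooth_iter s f : smooth f -> smooth (iter_partial s f).
Proof. by move=> sf t x; rewrite /iter_partial -foldr_cat; exact: sf. Qed.

Lemma smooth_partial i f : smooth f -> smooth (partial i f).
Proof. by move=> sf; exact: (smooth_iter [:: i] sf). Qed.

Lemma partialD i f g : (forall x, differentiable f x) -> (forall x, differentiable g x) ->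
  partial i (fun x => f x + g x) = fun x => partial i f x + partial i g x.
Proof.
move=> df dg; apply/funext => x; rewrite /partial.
transitivity (derive (f + g) x (@basisv R n i)); first by [].
rewrite deriveD //; exact: diff_derivable.
Qed.

Lemma partialM i f g : (forall x, differentiable f x) -> (forall x, differentiable g x) ->
  partial i (fun x => f x * g x) = fun x => partial i f x * g x + f x * partial i g x.
Proof.
move=> df dg; apply/funext => x; rewrite /partial.
transitivity (derive (f * g) x (@basisv R n i)); first by [].
rewrite deriveM; try exact: diff_derivable.
rewrite /GRing.scale /=. by rewrite addrC mulrC.
Qed.

Lemma partial_cst i c : partial i (@cstf R n c) = @cstf R n 0.
Proof. by apply/funext => x; rewrite /partial; exact: (derive_cst c x (@basisv R n i)). Qed.

Lemma smooth_cst c : smooth (@cstf R n c).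
Proof.
move=> s x; have [c' ->] : exists c', iter_partial s (@cstf R n c) = @cstf R n c'.
  elim: s => [|i s [c' IH]]; first by exists c.
  by exists 0; rewrite /= IH partial_cst.
exact: differentiable_cst.
Qed.

Lemma iter_partialD s f g : smooth f -> smooth g ->
  iter_partial s (fun x => f x + g x) = fun x => iter_partial s f x + iter_partial s g x.
Proof.
move=> sf sg; elim: s => [//|i s IH] /=.
by rewrite IH partialD.
Qed.

Lemma smoothD f g : smooth f -> smooth g -> smooth (fun x => f x + g x).
Proof.
move=> sf sg s x; rewrite iter_partialD //.
exact: (differentiableD (sf s x) (sg s x)).
Qed.

Lemma diff_sum (T : eqType) (l : seq T) (F : T -> fn) x :
  (forall p, p \in l -> forall y, differentiable (F p) y) ->
  differentiable (fun y => \sum_(p <- l) F p y) x.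
Proof.
elim: l => [|a l IH] H.
  have -> : (fun y => \sum_(p <- [::]) F p y) = @cstf R n 0.
    by apply/funext => y; rewrite big_nil.
  exact: differentiable_cst.
have -> : (fun y => \sum_(p <- a :: l) F p y) = (fun y => F a y + (fun y => \sum_(p <- l) F p y) y).
  by apply/funext => y; rewrite big_cons.
apply: differentiableD; first by apply: H; rewrite mem_head.
by apply: IH => p pl; apply: H; rewrite in_cons pl orbT.
Qed.

Lemma partial_sum i (T : eqType) (l : seq T) (F : T -> fn) :
  (forall p, p \in l -> forall y, differentiable (F p) y) ->
  partial i (fun y => \sum_(p <- l) F p y) = fun y => \sum_(p <- l) partial i (F p) y.
Proof.
elim: l => [|a l IH] H.
  have -> : (fun y => \sum_(p <- [::]) F p y) = @cstf R n 0.
    by apply/funext => y; rewrite big_nil.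
  by rewrite partial_cst; apply/funext => y; rewrite big_nil.
have -> : (fun y => \sum_(p <- a :: l) F p y) = (fun y => F a y + (fun y => \sum_(p <- l) F p y) y).
  by apply/funext => y; rewrite big_cons.
have Hl : forall p, p \in l -> forall y, differentiable (F p) y.
  by move=> p pl; apply: H; rewrite in_cons pl orbT.
rewrite partialD; last by move=> y; exact: diff_sum.
  by rewrite IH //; apply/funext => y; rewrite big_cons.
by apply: H; rewrite mem_head.
Qed.

Lemma smooth_sum (T : eqType) (l : seq T) (F : T -> fn) :
  (forall p, p \in l -> smooth (F p)) -> smooth (fun y => \sum_(p <- l) F p y).
Proof.
elim: l => [|a l IH] H.
  have -> : (fun y => \sum_(p <- [::]) F p y) = @cstf R n 0.
    by apply/funext => y; rewrite big_nil.
  exact: smooth_cst.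
have -> : (fun y => \sum_(p <- a :: l) F p y) = (fun y => F a y + (fun y => \sum_(p <- l) F p y) y).
  by apply/funext => y; rewrite big_cons.
apply: smoothD; first by apply: H; rewrite mem_head.
by apply: IH => p pl; apply: H; rewrite in_cons pl orbT.
Qed.

Lemma iter_partialM s f g : smooth f -> smooth g ->
  exists l : seq (seq 'I_n * seq 'I_n), iter_partial s (fun x => f x * g x) =
    fun x => \sum_(p <- l) iter_partial p.1 f x * iter_partial p.2 g x.
Proof.
move=> sf sg; elim: s => [|i s [l IH]].
  by exists [:: ([::], [::])]; apply/funext => x; rewrite big_seq1.
exists ([seq (i :: p.1, p.2) | p <- l] ++ [seq (p.1, i :: p.2) | p <- l]).
rewrite /= IH partial_sum; last first.
  move=> p _ y; apply: differentiableM; [exact: sf | exact: sg].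
apply/funext => x; rewrite big_cat !big_map /= -big_split /=.
by apply: eq_bigr => p _; rewrite partialM.
Qed.

Lemma smoothM f g : smooth f -> smooth g -> smooth (fun x => f x * g x).
Proof.
move=> sf sg s x; have [l ->] := iter_partialM s sf sg.
apply: diff_sum => p _ y; apply: differentiableM.
  exact: sf. exact: sg.
Qed.

End Aux.

Section Diffop.
Variables (R : realType) (n : nat).
Local Notation V := 'rV[R]_n.
Local Notation fn := (V -> R).
Implicit Types f g h : fn.
Implicit Types D : fn -> fn.

Lemma diffop_ext D D' : is_diffop D' -> (forall f, smooth f -> D f = D' f) -> is_diffop D.
Proof. by move=> [l [Hl HD]] E; exists l; split => // f sf; rewrite E // HD. Qed.

Lemma diffop_smooth D f : is_diffop D -> smooth f -> smooth (D f).
Proof.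
move=> [l [Hl HD]] sf; rewrite HD //; apply: smooth_sum => p pl.
by apply: smoothM; [exact: Hl | exact: smooth_iter].
Qed.

Lemma diffop_id : is_diffop (fun f : fn => f).
Proof.
exists [:: (@cstf R n 1, [::])]; split.
  by move=> p; rewrite mem_seq1 => /eqP ->; exact: smooth_cst.
by move=> f _; apply/funext => x; rewrite big_seq1 /= /cstf mul1r.
Qed.

Lemma diffop_zero : is_diffop (fun f : fn => @cstf R n 0).
Proof. by exists [::]; split => // f _; apply/funext => x; rewrite big_nil. Qed.

Lemma diffop_add D1 D2 : is_diffop D1 -> is_diffop D2 ->
  is_diffop (fun f x => D1 f x + D2 f x).
Proof.
move=> [l1 [H1 E1]] [l2 [H2 E2]]; exists (l1 ++ l2); split.
  by move=> p; rewrite mem_cat => /orP [/H1|/H2].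
by move=> f sf; apply/funext => x; rewrite big_cat E1 // E2.
Qed.

Lemma diffop_mulc a D : smooth a -> is_diffop D -> is_diffop (fun f x => a x * D f x).
Proof.
move=> sa [l [Hl E]]; exists [seq (mulfn a p.1, p.2) | p <- l]; split.
  move=> q /mapP [p pl ->] /=; apply: smoothM => //; exact: Hl.
by move=> f sf; apply/funext => x; rewrite E // big_map mulr_sumr;
  apply: eq_bigr => p _; rewrite /mulfn /= !mulrA.
Qed.

Lemma diffop_opp D : is_diffop D -> is_diffop (fun f x => - D f x).
Proof.
move=> HD; apply: (diffop_ext (diffop_mulc (smooth_cst (-1)) HD)) => f _.
by apply/funext => x; rewrite /cstf mulN1r.
Qed.

Lemma diffop_partial i D : is_diffop D -> is_diffop (fun f => partial i (D f)).
Proof.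
move=> [l [Hl E]].
exists ([seq (partial i p.1, p.2) | p <- l] ++ [seq (p.1, i :: p.2) | p <- l]); split.
  move=> q; rewrite mem_cat => /orP [] /mapP [p pl ->] /=.
    by apply: smooth_partial; exact: Hl.
  exact: Hl.
move=> f sf; rewrite E // partial_sum; last first.
  move=> p pl y; apply: differentiableM; [exact: (Hl p pl [::] y) | exact: sf].
apply/funext => x; rewrite big_cat !big_map /= -big_split /=.
apply: eq_big_seq => p pl; rewrite partialM //.
move=> y; exact: (Hl p pl [::] y).
Qed.

Lemma diffop_iter s D : is_diffop D -> is_diffop (fun f => iter_partial s (D f)).
Proof.
move=> HD; elim: s => [|i s IH] /=; first exact: (diffop_ext HD).
exact: (diffop_partial i IH).
Qed.

Lemma diffop_comp D1 D2 : is_diffop D1 -> is_diffop D2 -> is_diffop (fun f => D1 (D2 f)).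
Proof.
move=> [l [Hl E]] H2.
suff : is_diffop (fun f x => \sum_(p <- l) p.1 x * iter_partial p.2 (D2 f) x).
  move=> H; apply: (diffop_ext H) => f sf; rewrite E //; exact: diffop_smooth.
elim: l Hl {E} => [|a l IH] Hl.
  apply: (diffop_ext diffop_zero) => f _; apply/funext => x; by rewrite big_nil.
have Ha : smooth a.1 by apply: Hl; rewrite mem_head.
have Hl' : forall p, p \in l -> smooth p.1.
  by move=> p pl; apply: Hl; rewrite in_cons pl orbT.
apply: (diffop_ext (diffop_add (diffop_mulc Ha (diffop_iter a.2 H2)) (IH Hl'))).
by move=> f _; apply/funext => x; rewrite big_cons.
Qed.

Lemma diffop_sum m (Ds : nat -> fn -> fn) : (forall s, (s < m)%N -> is_diffop (Ds s)) ->
  is_diffop (fun f x => \sum_(s < m) Ds s f x).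
Proof.
elim: m => [|m IH] H.
  apply: (diffop_ext diffop_zero) => f _; apply/funext => x; by rewrite big_ord0.
have H1 : forall s, (s < m)%N -> is_diffop (Ds s) by move=> s sm; apply: H; exact: ltnW.
apply: (diffop_ext (diffop_add (IH H1) (H m (ltnSn m)))).
by move=> f _; apply/funext => x; rewrite big_ord_recr.
Qed.

End Diffop.

Section SDef.
Variables (R : realType) (n : nat).
Local Notation fn := ('rV[R]_n -> R).
Variable rho : nat -> fn -> fn.

Fixpoint Slist (r : nat) : seq (fn -> fn) :=
  match r with
  | 0 => [:: id]
  | r'.+1 => let L := Slist r' in
      rcons L (fun h x => - \sum_(s < r'.+1) nth id L s (rho (r'.+1 - s) h) x)
  end.

Definition Sop (r : nat) : fn -> fn := nth id (Slist r) r.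

Lemma size_Slist r : size (Slist r) = r.+1.
Proof. by elim: r => [//|r IH] /=; rewrite size_rcons IH. Qed.

Lemma nth_Slist r s : (s <= r)%N -> nth id (Slist r) s = Sop s.
Proof.
elim: r s => [|r IH] s.
  by rewrite leqn0 => /eqP ->.
rewrite leq_eqVlt => /orP [/eqP -> //|]; rewrite ltnS => sr /=.
by rewrite nth_rcons size_Slist ltnS sr IH.
Qed.

Lemma Sop0 : Sop 0 = id.
Proof. by []. Qed.

Lemma SopS r : Sop r.+1 = fun h x => - \sum_(s < r.+1) Sop s (rho (r.+1 - s) h) x.
Proof.
rewrite /Sop /= nth_rcons size_Slist ltnn eqxx.
apply/funext => h; apply/funext => x; congr (- _); apply: eq_bigr => s _.
by rewrite nth_Slist // -ltnS.
Qed.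

End SDef.

Unset Implicit Arguments.
Set Strict Implicit.

Theorem corollary4 (R : realType) (n : nat)
  (P : ('rV[R]_n -> R) -> ('rV[R]_n -> R) -> ('rV[R]_n -> R))
  (C : nat -> ('rV[R]_n -> R) -> ('rV[R]_n -> R) -> ('rV[R]_n -> R))
  (rho : nat -> ('rV[R]_n -> R) -> ('rV[R]_n -> R)) :
  poisson_bracket P ->
  star_product P C ->
  sun_cochains C rho ->
  exists S : nat -> ('rV[R]_n -> R) -> ('rV[R]_n -> R),
    [/\ (forall f, smooth f -> S 0%N f = f),
        (forall r, (1 <= r)%N -> is_diffop (S r)) &
        (forall f g, smooth f -> smooth g ->
           applyS S (sunF rho (embF f) (embF g)) = embF (mulfn f g))].
Proof.
move=> _ _ Hrho.
exists (Sop rho); split => //.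
  suff H : forall r s, (s <= r)%N -> is_diffop (Sop rho s) by move=> r _; exact: (H r).
  elim=> [|r IH] s.
    rewrite leqn0 => /eqP ->; rewrite Sop0; exact: diffop_id.
  rewrite leq_eqVlt => /orP [/eqP ->|]; last by rewrite ltnS; exact: IH.
  rewrite SopS; apply: diffop_opp.
  apply: (diffop_sum (m := r.+1) (Ds := fun s h => Sop rho s (rho (r.+1 - s)%N h))) => t tr.
  apply: diffop_comp; first by apply: IH; rewrite -ltnS.
  exact: (Hrho _).1.
move=> f g _ _; apply/funext => r; apply/funext => x.
rewrite /applyS /sunF /embF /piF /=.
case: r => [|r]; first by rewrite big_ord1.
rewrite big_ord_recr /= subnn eqxx SopS /=.
rewrite /cstf; apply/eqP; rewrite subr_eq0; apply/eqP.
apply: eq_bigr => s _.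
by rewrite subn_eq0 leqNgt ltn_ord.
Qed.
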